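(* Let $\mathbf{PG}$ be a consistent PCFG with start symbol $s$, no $\varepsilon$-rule, no useless nonterminal, and in which every rule has positive selection probability. Let $\ell$ be a prefix, let $\mathrm{Expl}(G_\ell)$ be its explanation graph and $\mathrm{Eq}(G_\ell)$ its system of probability equations (defined in the context). Let $S=\{A_1,\dots,A_K\}$ be an SCC of defined goals of $\mathrm{Expl}(G_\ell)$, and write the probability equations of the goals in $S$ as $\mathbf{X}_A=M\mathbf{X}_A+\mathbf{Y}_A$ with $\mathbf{X}_A=(P(A_1),\dots,P(A_K))^T$, as described in the context. Then this system has a unique solution, namely $\mathbf{X}_A=(I-M)^{-1}\mathbf{Y}_A$ (in particular $I-M$ is invertible).
   Context: Grammar: the underlying CFG has finite terminal set $\Sigma$, finite nonterminal set $N$, start symbol $s\in N$; every rule $A\to\alpha$ has $\alpha\in(N\cup\Sigma)^+$; no nonterminal is useless (each has a rule occurring in some derivation of a terminal string from $s$). $\mathbf{PG}$ assigns to each rule $A\to\alpha$ a selection probability $\theta_{A\to\alpha}>0$ with $\sum_\alpha\theta_{A\to\alpha}=1$ for each $A$; the probability of a derivation is the product of the probabilities of the rules used; $\mathbf{PG}$ is consistent if the total probability of terminal strings derived from $s$ is $1$. A prefix is a nonempty string $\ell\in\Sigma^+$ that is an initial segment of some terminal string derivable from $s$. Explanation graph. For a prefix $\ell$ consider ground atoms $q(\ell)$, $p(\beta,u,v)$ with $\beta\in(N\cup\Sigma)^*$, $u,v\in\Sigma^*$, and switch atoms $m(A\to\alpha)$. Consider all ground clauses: (C0) $q(\ell)\leftarrow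 p(s,\ell,\varepsilon)$; (C1) $p(\varepsilon,u,u)\leftarrow$ (empty body), for all $u$; (C2) for $a\in\Sigma$: $p(a\beta,a,\varepsilon)\leftarrow$ (empty body); and $p(a\beta,av,w)\leftarrow p(\beta,v,w)$ whenever $v\neq\varepsilon$; (C3) for $A\in N$ and each rule $A\to\alpha$: $p(A\beta,u,\varepsilon)\leftarrow m(A\to\alpha)\wedge p(\alpha,u,\varepsilon)$; and $p(A\beta,u,w)\leftarrow m(A\to\alpha)\wedge p(\alpha,u,v)\wedge p(\beta,v,w)$ whenever $v\neq\varepsilon$. A $p$- or $q$-atom is provable if it lies in the least Herbrand model of these clauses with all $m$-atoms true. The defined goals of $\mathrm{Expl}(G_\ell)$ form the smallest set containing $q(\ell)$ such that whenever $H$ is a defined goal and $H\leftarrow\alpha$ is one of the clauses above whose $p$-atoms are all provable, every $p$-atom of $\alpha$ is a defined goal. The defining formula of $H$ is $H\Leftrightarrow\alpha_1\vee\dots\vee\alpha_M$, the $\alpha_i$ being the bodies of all such clauses with head $H$ whose $p$-atoms are all provable. $H$ is a parent of $C$ if $C$ occurs in some $\alpha_i$; ancestor is the transitive closure; SCCs are the classes of the equivalence ''$A=B$ or each is an ancestor of the other''. Probability equations $\mathrm{Eq}(G_\ell)$: one real unknown $P(H)$ per defined goal $H$, with equation $P(H)=\sum_{i=1}^M\big(\prod_{C\text{ defined goal in }\alpha_i}P(C)\big)\big(\prod_{m(A\to\alpha)\text{ in }\alpha_i}\theta_{A\to\alpha}\big)$ (empty products equal $1$). This system has a least non-negative solution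 $\mathbf{X}_\infty$. Each disjunct $\alpha_i$ of a defining formula contains at most one defined goal from any given SCC, and all other defined goals in the defining formulas of goals in $S$ lie in SCCs not equal to $S$. Writing $\mathbf{X}_A=(P(A_1),\dots,P(A_K))^T$, the equations for $A_1,\dots,A_K$ take the form $\mathbf{X}_A=M\mathbf{X}_A+\mathbf{Y}_A$, where $M_{jk}$ is the sum, over disjuncts of the defining formula of $A_j$ that contain $A_k$, of the product of the $\theta$'s and of the $P(C)$ for the other defined goals $C$ in that disjunct, and $(\mathbf{Y}_A)_j$ is the sum, over disjuncts of the defining formula of $A_j$ containing no goal of $S$, of the corresponding products; here every $P(C)$ with $C\notin S$ is treated as a constant equal to its value in $\mathbf{X}_\infty$. $I$ is the $K\times K$ identity matrix. *)

(* Defs.v *)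
From HB Require Import structures.
From mathcomp Require Import all_boot all_order all_algebra.
From mathcomp Require Import boolp classical_sets functions cardinality fsbigop.
From mathcomp Require Import reals constructive_ereal ereal esum.
From Stdlib Require Import Relations.Relation_Operators.

Set Implicit Arguments.
Unset Strict Implicit.
Unset Printing Implicit Defensive.

Import Order.TTheory GRing.Theory Num.Theory.
Local Open Scope ring_scope.
Local Open Scope classical_set_scope.

Definition sym (T N : finType) := (T + N)%type.
Definition rule (T N : finType) := (N * seq (sym T N))%type.

(* We use the generic tree type GenTree.tree T:
   a leaf [Leaf a] is an occurrence of the terminal a, and a node
   [Node i ts] is an application of the i-th rule of [rules] (0-based) whose
   children [ts] are the subtrees for the symbols of the right-hand side.    *)
Definition ptree (T : finType) := GenTree.tree T.

Fixpoint valid_tree (T N : finType) (rules : seq (rule T N))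
    (X : sym T N) (t : ptree T) {struct t} : bool :=
  match t with
  | GenTree.Leaf a => X == inl a
  | GenTree.Node i ts =>
      match X with
      | inl _ => false
      | inr A =>
          match onth rules i with
          | None => false
          | Some r =>
              (r.1 == A) &&
              (fix chk (al : seq (sym T N)) (us : seq (ptree T)) {struct us} :=
                 match al, us with
                 | [::], [::] => true
                 | x :: al', u :: us' => valid_tree rules x u && chk al' us'
                 | _, _ => false
                 end) r.2 ts
          end
      end
  end.

Fixpoint tree_prob (R : realType) (T N : finType) (rules : seq (rule T N))
    (theta : rule T N -> R) (t : ptree T) {struct t} : R :=
  match t with
  | GenTree.Leaf _ => 1
  | GenTree.Node i ts =>
      match onth rules i with
      | None => 0
      | Some r => theta r
      end *
      (fix pr (us : seq (ptree T)) {struct us} : R :=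
         match us with
         | [::] => 1
         | u :: us' => tree_prob rules theta u * pr us'
         end) ts
  end.

Fixpoint tree_yield (T : finType) (t : ptree T) {struct t} : seq T :=
  match t with
  | GenTree.Leaf a => [:: a]
  | GenTree.Node _ ts =>
      (fix yl (us : seq (ptree T)) {struct us} : seq T :=
         match us with
         | [::] => [::]
         | u :: us' => tree_yield u ++ yl us'
         end) ts
  end.

Fixpoint uses_rule_of (T N : finType) (rules : seq (rule T N)) (A : N)
    (t : ptree T) {struct t} : bool :=
  match t with
  | GenTree.Leaf _ => false
  | GenTree.Node i ts =>
      match onth rules i with
      | None => false
      | Some r => r.1 == A
      end ||
      (fix an (us : seq (ptree T)) {struct us} : bool :=
         match us with
         | [::] => false
         | u :: us' => uses_rule_of rules A u || an us'
         end) ts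
  end.

Definition no_eps_rule (T N : finType) (rules : seq (rule T N)) : Prop :=
  forall r, r \in rules -> r.2 != [::].

Definition is_PCFG (R : realType) (T N : finType) (rules : seq (rule T N))
    (theta : rule T N -> R) : Prop :=
  uniq rules /\
  (forall r, r \in rules -> 0 < theta r) /\
  (forall A : N, \sum_(r <- rules | r.1 == A) theta r = 1).

Definition no_useless (T N : finType) (rules : seq (rule T N)) (s : N) : Prop :=
  forall A : N, exists t, valid_tree rules (inr s) t /\ uses_rule_of rules A t.

Definition consistent (R : realType) (T N : finType) (rules : seq (rule T N))
    (theta : rule T N -> R) (s : N) : Prop :=
  (\esum_(t in [set t : ptree T | valid_tree rules (inr s) t])
      (tree_prob rules theta t)%:E = 1)%E.

Definition is_prefix (T N : finType) (rules : seq (rule T N)) (s : N)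
    (l : seq T) : Prop :=
  l != [::] /\ exists t, valid_tree rules (inr s) t /\ prefix l (tree_yield t).

(* Ground atoms: q(l) is [inl l], p(beta,u,v) is [inr (beta,u,v)].           *)
Definition atom (T N : finType) := (seq T + (seq (sym T N) * seq T * seq T))%type.

Definition patom (T N : finType) (b : seq (sym T N)) (u v : seq T) : atom T N :=
  inr (b, u, v).

(* [clause rules s l H ms ps]: there is a ground clause with head H whose body
   consists of the switch atoms m(r) for r in ms and the atoms ps.          *)
Inductive clause (T N : finType) (rules : seq (rule T N)) (s : N) (l : seq T)
  : atom T N -> seq (rule T N) -> seq (atom T N) -> Prop :=
| C0 : clause rules s l (inl l) [::] [:: patom [:: inr s] l [::]]
| C1 u : clause rules s l (patom [::] u u) [::] [::]
| C2a a b : clause rules s l (patom (inl a :: b) [:: a] [::]) [::] [::]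
| C2b a b v w : v != [::] ->
    clause rules s l (patom (inl a :: b) (a :: v) w) [::] [:: patom b v w]
| C3a A b alpha u : (A, alpha) \in rules ->
    clause rules s l (patom (inr A :: b) u [::]) [:: (A, alpha)]
      [:: patom alpha u [::]]
| C3b A b alpha u v w : (A, alpha) \in rules -> v != [::] ->
    clause rules s l (patom (inr A :: b) u w) [:: (A, alpha)]
      [:: patom alpha u v; patom b v w].

(* least Herbrand model with all switch atoms true *)
Inductive provable (T N : finType) (rules : seq (rule T N)) (s : N) (l : seq T)
  : atom T N -> Prop :=
| prov H ms ps : clause rules s l H ms ps ->
    (forall C, C \in ps -> provable rules s l C) -> provable rules s l H.

(* disjuncts of the defining formula of H: bodies (switches, atoms) of the
   clauses with head H whose atoms are all provable *)
Definition disj (T N : finType) (rules : seq (rule T N)) (s : N) (l : seq T)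
    (H : atom T N) : set (seq (rule T N) * seq (atom T N)) :=
  [set b | clause rules s l H b.1 b.2 /\
           forall C, C \in b.2 -> provable rules s l C].

Inductive defined (T N : finType) (rules : seq (rule T N)) (s : N) (l : seq T)
  : atom T N -> Prop :=
| def_top : defined rules s l (inl l)
| def_step H b C : defined rules s l H -> disj rules s l H b -> C \in b.2 ->
    defined rules s l C.

Definition parent (T N : finType) (rules : seq (rule T N)) (s : N) (l : seq T)
    (H C : atom T N) : Prop :=
  defined rules s l H /\ exists b, disj rules s l H b /\ C \in b.2.

Definition ancestor (T N : finType) (rules : seq (rule T N)) (s : N)
    (l : seq T) : atom T N -> atom T N -> Prop :=
  clos_trans _ (parent rules s l).

Definition same_scc (T N : finType) (rules : seq (rule T N)) (s : N)
    (l : seq T) (H C : atom T N) : Prop :=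
  H = C \/ (ancestor rules s l H C /\ ancestor rules s l C H).

(* Probability equations Eq(G_l).  An assignment X gives a real P(H) = X H to
   each atom (only the values at defined goals matter).                     *)
Definition disj_value (R : realType) (T N : finType) (theta : rule T N -> R)
    (X : atom T N -> R) (b : seq (rule T N) * seq (atom T N)) : R :=
  (\prod_(C <- b.2) X C) * (\prod_(r <- b.1) theta r).

Definition eq_rhs (R : realType) (T N : finType) (rules : seq (rule T N))
    (theta : rule T N -> R) (s : N) (l : seq T) (X : atom T N -> R)
    (H : atom T N) : R :=
  \sum_(b \in disj rules s l H) disj_value theta X b.

Definition is_solution (R : realType) (T N : finType) (rules : seq (rule T N))
    (theta : rule T N -> R) (s : N) (l : seq T) (X : atom T N -> R) : Prop :=
  forall H, defined rules s l H -> X H = eq_rhs rules theta s l X H.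

Definition nonneg_on_goals (R : realType) (T N : finType)
    (rules : seq (rule T N)) (s : N) (l : seq T) (X : atom T N -> R) : Prop :=
  forall H, defined rules s l H -> 0 <= X H.

Definition least_nonneg_solution (R : realType) (T N : finType)
    (rules : seq (rule T N)) (theta : rule T N -> R) (s : N) (l : seq T)
    (X : atom T N -> R) : Prop :=
  is_solution rules theta s l X /\ nonneg_on_goals rules s l X /\
  forall Z, is_solution rules theta s l Z -> nonneg_on_goals rules s l Z ->
    forall H, defined rules s l H -> X H <= Z H.

Definition is_scc_enum (T N : finType) (rules : seq (rule T N)) (s : N)
    (l : seq T) (K : nat) (A : 'I_K -> atom T N) : Prop :=
  injective A /\
  exists A0, defined rules s l A0 /\
    forall H, (defined rules s l H /\ same_scc rules s l H A0) <->
              exists j, A j = H.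

(* The matrix M and vector Y of the block X_A = M X_A + Y_A, where the goals
   outside S are given their values in Xinf. *)
Definition scc_M (R : realType) (T N : finType) (rules : seq (rule T N))
    (theta : rule T N -> R) (s : N) (l : seq T) (Xinf : atom T N -> R)
    (K : nat) (A : 'I_K -> atom T N) : 'M[R]_K :=
  \matrix_(j, k)
    \sum_(b \in [set b | disj rules s l (A j) b /\ A k \in b.2])
       ((\prod_(C <- b.2 | C != A k) Xinf C) * (\prod_(r <- b.1) theta r)).

Definition scc_Y (R : realType) (T N : finType) (rules : seq (rule T N))
    (theta : rule T N -> R) (s : N) (l : seq T) (Xinf : atom T N -> R)
    (K : nat) (A : 'I_K -> atom T N) : 'cV[R]_K :=
  \col_j
    \sum_(b \in [set b | disj rules s l (A j) b /\ forall k, A k \notin b.2])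
       disj_value theta Xinf b.

(* Main.v *)
Require Import Defs.
From HB Require Import structures.
From mathcomp Require Import all_boot all_order all_algebra.
From mathcomp Require Import boolp classical_sets functions cardinality fsbigop.
From mathcomp Require Import reals constructive_ereal ereal esum.
From mathcomp Require Import ring lra.
From Stdlib Require Import Relations.Relation_Operators.

Set Implicit Arguments.
Unset Strict Implicit.
Unset Printing Implicit Defensive.
Import Order.TTheory GRing.Theory Num.Theory.
Local Open Scope ring_scope.
Local Open Scope classical_set_scope.

Section MatS.
Variable R : realFieldType.

Lemma kernel0 K (M : 'I_K -> 'I_K -> R) (x Y : 'I_K -> R) :
 (forall i j, 0 <= M i j) -> (forall i, 0 < x i) -> (forall i, 0 <= Y i) ->
 (forall i, \sum_j M i j * x j + Y i <= x i) -> (exists j, 0 < Y j) ->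
 (forall Z : pred 'I_K, (exists i, Z i) -> (forall i j, Z i -> 0 < M i j -> Z j) -> forall i, Z i) ->
 forall z : 'I_K -> R, (forall i, z i = \sum_j M i j * z j) -> forall i, z i = 0.
Proof.
move=> M0 x0 Y0 Hx [jY HjY] Hirr z Hz i.
apply/eqP; apply/negPn/negP => zi.
have [i1 _ Hmax] := @arg_maxP _ _ _ i (fun=> true) (fun k => `|z k| / x k) isT.
set c := `|z i1| / x i1.
have cpos : 0 < c.
  apply: (lt_le_trans _ (Hmax i isT)).
  by rewrite divr_gt0 // normr_gt0.
pose w k := c * x k - `|z k|.
have wge0 k : 0 <= w k.
  rewrite /w subr_ge0 -ler_pdivrMr //; exact: Hmax.
have key k : w k = 0 -> \sum_j M k j * w j + c * Y k <= 0.
  move=> wk.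
  have e1 : c * x k = `|z k| by apply/eqP; rewrite -subr_eq0; apply/eqP.
  have e2 : `|z k| <= \sum_j M k j * `|z j|.
    rewrite {1}Hz; apply: (le_trans (ler_norm_sum _ _ _)).
    by apply: ler_sum => j _; rewrite normrM ger0_norm.
  have e3 : \sum_j M k j * `|z j| = c * \sum_j M k j * x j - \sum_j M k j * w j.
    rewrite mulr_sumr -sumrB; apply: eq_bigr => j _; rewrite /w; ring.
  have := Hx k; rewrite -(ler_pM2l cpos) => e4.
  have : c * x k <= c * x k - c * Y k - \sum_j M k j * w j.
    rewrite {1}e1; apply: (le_trans e2); rewrite e3.
    rewrite lerB //; rewrite mulrDr in e4; by rewrite lerBrDr.
  move=> h; lra.
have Zall : forall k, w k == 0.
  apply: Hirr.
    exists i1; rewrite /w /c divfK ?subrr // gt_eqF //.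
  move=> k j /eqP wk Mkj; have := key k wk => h.
  have Hs : 0 <= \sum_j0 M k j0 * w j0 by apply: sumr_ge0 => *; rewrite mulr_ge0.
  have Hcy : 0 <= c * Y k by rewrite mulr_ge0 // ltW.
  have s0 : \sum_j0 M k j0 * w j0 = 0.
    apply/eqP; rewrite eq_le Hs andbT.
    by apply: le_trans h; rewrite lerDl.
  have : M k j * w j = 0.
    apply/eqP; rewrite eq_le mulr_ge0 ?andbT //.
    rewrite -s0 (bigD1 j) //= lerDl; apply: sumr_ge0 => *; rewrite mulr_ge0 //.
  by move/eqP; rewrite mulf_eq0 gt_eqF.
have := key jY (eqP (Zall jY)).
have Hs : 0 <= \sum_j0 M jY j0 * w j0 by apply: sumr_ge0 => *; rewrite mulr_ge0.
move=> h; have : c * Y jY <= 0.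
  by apply: le_trans h; rewrite lerDr.
by rewrite leNgt mulr_gt0.
Qed.
End MatS.

Lemma unit_of_kernel (F : fieldType) K (B : 'M[F]_K) :
  (forall z : 'I_K -> F, (forall i, \sum_j B i j * z j = 0) -> forall i, z i = 0) ->
  B \in unitmx.
Proof.
move=> h; rewrite -unitmx_tr unitmxE unitfE; apply/negP => /det0P [v vn0 vB].
move/negP: vn0; apply; apply/eqP/matrixP => a i; rewrite [a]ord1 mxE; apply: h => i'.
have := congr1 (fun m : 'M[F]_(1,K) => m 0 i') vB; rewrite !mxE => E.
by apply: etrans E; apply: eq_bigr => j _; rewrite mxE mulrC.
Qed.

Lemma lin_equiv (F : fieldType) K (M : 'M[F]_K) (Y : 'cV[F]_K) :
  (1%:M - M) \in unitmx -> forall x, x = M *m x + Y <-> x = invmx (1%:M - M) *m Y.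
Proof.
move=> U x; split => E.
  have <- : (1%:M - M) *m x = Y.
    by rewrite mulmxBl mul1mx {1}E addrAC subrr add0r.
  by rewrite mulKmx.
have : (1%:M - M) *m x = Y by rewrite E mulKVmx.
rewrite mulmxBl mul1mx => /eqP; rewrite subr_eq => /eqP {1}->; by rewrite addrC.
Qed.

Section G.
Variables (R : realType) (T N : finType) (rules : seq (rule T N)) (theta : rule T N -> R) (s : N) (l : seq T).
Hypothesis Hnoeps : no_eps_rule rules.

Lemma prov_suffix H : provable rules s l H -> forall b u v, H = patom b u v ->
  (exists n, v = drop n u) /\ (b != [::] -> (size v < size u)%N).
Proof.
elim=> {H} H ms ps c _ IH b0 u0 v0.
case: c IH => [|u|a b|a b v w vn0|A0 b alpha u Ar|A0 b alpha u v w Ar vn0] IH //;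
  rewrite /patom => -[<- <- <-].
- by split => //; exists 0%N; rewrite drop0.
- by split => //; exists 1%N.
- have [[n ->] _] := IH _ (mem_head _ _) _ _ _ erefl.
  split; first by exists n.+1.
  by move=> _; rewrite /= size_drop ltnS leq_subr.
- have [_ h] := IH _ (mem_head _ _) _ _ _ erefl.
  have /h : alpha != [::].
    move: (Hnoeps Ar). done.
  move=> su; split => //; exists (size u); by rewrite drop_size.
- have m2 : patom b v w \in [:: patom alpha u v; patom b v w] by rewrite !inE eqxx orbT.
  have [[m ->] _] := IH _ m2 _ _ _ erefl.
  have [[n Ev] h1] := IH _ (mem_head _ _) _ _ _ erefl.
  rewrite Ev in h1 *.
  have su := h1 (Hnoeps Ar).
  split; first by exists (m + n)%N; rewrite drop_drop.
  move=> _; apply: leq_ltn_trans su; by rewrite size_drop leq_subr.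
Qed.


Definition usz (H : atom T N) : nat :=
  match H with inl l' => size l' | inr t => size t.1.2 end.

Lemma clause_child H ms ps C : clause rules s l H ms ps ->
  (forall C, C \in ps -> provable rules s l C) -> C \in ps ->
  (usz C <= usz H)%N /\ exists t, C = inr t.
Proof.
case=> [|u|a b|a b v w vn0|A0 b alpha u Ar|A0 b alpha u v w Ar vn0] Hp;
  rewrite ?inE => //.
- by move=> /eqP ->; split => //; eexists.
- by move=> /eqP ->; split; [rewrite /= leqnSn | eexists].
- by move=> /eqP ->; split => //; eexists.
- case/orP => /eqP ->; first by split => //; eexists.
  have [[n ->] _] := prov_suffix (Hp _ (mem_head _ _)) erefl.
  by split; [rewrite /= size_drop leq_subr | eexists].
Qed.

Lemma clause_ms H ms ps : clause rules s l H ms ps -> forall r, r \in ms -> r \in rules.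
Proof.
case=> [|u|a b|a b v w vn0|A0 b alpha u Ar|A0 b alpha u v w Ar vn0] r //;
  by rewrite inE => /eqP ->.
Qed.

Lemma disj_shape H b : disj rules s l H b -> b.2 = [::] \/ (exists C, b.2 = [:: C]) \/
  (exists C1 C2, b.2 = [:: C1; C2] /\ (usz C2 < usz H)%N).
Proof.
case: b => ms ps [/= c Hp]; case: c Hp => [|u|a b|a b v w vn0|A0 b alpha u Ar|A0 b alpha u v w Ar vn0] Hp;
  try by [left | right; left; eexists].
right; right; do 2 eexists; split; first by [].
have [[n ->] h] := prov_suffix (Hp _ (mem_head _ _)) erefl.
exact: h (Hnoeps Ar).
Qed.

Definition suffixes (u : seq T) := [seq drop n u | n <- iota 0 (size u).+1].

Definition cand (H : atom T N) : seq (seq (rule T N) * seq (atom T N)) :=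
  match H with
  | inl l' => [:: ([::], [:: patom [:: inr s] l' [::]])]
  | inr (b, u, w) =>
    [:: ([::], [::]); ([::], [:: patom (behead b) (behead u) w])] ++
    [seq ([:: r], [:: patom r.2 u [::]]) | r <- rules] ++
    [seq ([:: r], [:: patom r.2 u v; patom (behead b) v w]) | r <- rules, v <- suffixes u]
  end.

Lemma cand_patom b u w : cand (patom b u w) =
    [:: ([::], [::]); ([::], [:: patom (behead b) (behead u) w])] ++
    [seq ([:: r], [:: patom r.2 u [::]]) | r <- rules] ++
    [seq ([:: r], [:: patom r.2 u v; patom (behead b) v w]) | r <- rules, v <- suffixes u].
Proof. by []. Qed.

Lemma clause_cand H ms ps : clause rules s l H ms ps ->
  (forall C, C \in ps -> provable rules s l C) -> (ms, ps) \in cand H.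
Proof.
case=> [|u|a b|a b v w vn0|A0 b alpha u Ar|A0 b alpha u v w Ar vn0] Hp.
- by rewrite inE.
- by rewrite inE.
- by rewrite inE.
- by rewrite !inE eqxx orbT.
- by rewrite cand_patom !mem_cat map_f ?orbT.
- rewrite cand_patom !mem_cat; apply/orP; right; apply/orP; right.
  have [[n Ev] _] := prov_suffix (Hp _ (mem_head _ _)) erefl.
  apply/allpairsP; exists ((A0, alpha), v); split => //.
  have nu : (n <= size u)%N.
    case: (leqP n (size u)) => // /ltnW nu; move: vn0; rewrite Ev drop_oversize //.
  by rewrite Ev; apply/mapP; exists n; rewrite // mem_iota add0n ltnS.
Qed.


Inductive rstar : atom T N -> atom T N -> Prop :=
| rs0 x : rstar x x
| rsS x y z : parent rules s l x y -> rstar y z -> rstar x z.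

Lemma parent_props x y : parent rules s l x y -> (usz y <= usz x)%N /\ exists t, y = inr t.
Proof. move=> [_ [b [[c Hp] yb]]]; exact: clause_child c Hp yb. Qed.

Lemma rstar_trans x y z : rstar x y -> rstar y z -> rstar x z.
Proof. by elim=> // a b c p _ IH /IH; apply: rsS. Qed.

Lemma anc_rstar x y : ancestor rules s l x y -> rstar x y.
Proof.
elim=> [a b p|a b c _ IH1 _ IH2]; first exact: rsS p (rs0 _).
exact: rstar_trans IH1 IH2.
Qed.

Lemma rstar_anc x y : rstar x y -> x = y \/ ancestor rules s l x y.
Proof.
elim=> [a|a b c p _ [<-|IH]]; [by left | right; exact: t_step |].
by right; apply: t_trans (t_step _ _ _ _ p) IH.
Qed.

Lemma rstar_usz x y : rstar x y -> (usz y <= usz x)%N.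
Proof.
elim=> // a b c /parent_props [h _] _ IH; exact: leq_trans IH h.
Qed.

Lemma rstar_inl x l' : rstar x (inl l') -> x = inl l'.
Proof.
have gen : forall z, rstar x z -> z = inl l' -> x = inl l'.
  move=> z; elim => // a b c p _ IH E.
  have Eb := IH E; have [_ [t Et]] := parent_props p; by rewrite Et in Eb.
by move=> h; apply: gen h erefl.
Qed.

Lemma fsum_seq (I : choiceType) (r : seq I) (P : set I) (F : I -> R) :
  uniq r -> P `<=` [set` r] ->
  \sum_(i \in P) F i = \sum_(i <- r) (if i \in P then F i else 0).
Proof.
move=> ur Pr.
rewrite (eq_fsbigr (fun i => if i \in P then F i else 0)); last by move=> i ->.
apply: fsbig_fwiden => // i [_ nP]; rewrite /preimage /= ifF //.
by apply/negbTE; apply/negP => /set_mem.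
Qed.


Lemma finD H : finite_set (disj rules s l H).
Proof.
apply: (sub_finite_set _ (finite_seq (cand H))) => -[ms ps] [c Hp] /=.
exact: clause_cand c Hp.
Qed.

Lemma disj_child H b C : defined rules s l H -> disj rules s l H b -> C \in b.2 ->
  defined rules s l C /\ provable rules s l C.
Proof. move=> dH db Cb; split; [exact: def_step dH db Cb | exact: db.2]. Qed.

Variable Xinf : atom T N -> R.
Hypothesis HX : least_nonneg_solution rules theta s l Xinf.
Hypothesis Hth : forall r, r \in rules -> 0 < theta r.

Lemma dv_ge0 H b : defined rules s l H -> disj rules s l H b -> 0 <= disj_value theta Xinf b.
Proof.
move=> dH db; rewrite /disj_value mulr_ge0 //.
  rewrite big_seq; apply: prodr_ge0 => C Cb.
  exact: HX.2.1 (disj_child dH db Cb).1.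
rewrite big_seq; apply: prodr_ge0 => r rb; apply: ltW; apply: Hth.
exact (clause_ms db.1 rb).
Qed.

Lemma dv_pos b : (forall C, C \in b.2 -> 0 < Xinf C) ->
  (forall r, r \in b.1 -> r \in rules) -> 0 < disj_value theta Xinf b.
Proof.
move=> h1 h2; rewrite /disj_value mulr_gt0 //.
  by rewrite big_seq; apply: prodr_gt0 => C Cb; apply: h1.
by rewrite big_seq; apply: prodr_gt0 => r rb; apply: Hth; apply: h2.
Qed.

Lemma fsum_ge_term (I : choiceType) (P : set I) (F : I -> R) i :
  finite_set P -> (forall j, P j -> 0 <= F j) -> P i -> F i <= \sum_(j \in P) F j.
Proof.
move=> fP F0 Pi; rewrite (fsbigD1 i) //= lerDl; apply: fsumr_ge0 => j [Pj _].
exact: F0.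
Qed.

Lemma Xpos H : provable rules s l H -> defined rules s l H -> 0 < Xinf H.
Proof.
elim=> {H} H ms ps c Hp IH dH.
have db : disj rules s l H (ms, ps) by split.
rewrite (HX.1 H dH) /eq_rhs.
apply: lt_le_trans (fsum_ge_term _ _ db); first apply: dv_pos => /=.
- by move=> C Cps; apply: IH => //; exact: (disj_child dH db Cps).1.
- exact: clause_ms c.
- exact: finD.
- by move=> b; apply: dv_ge0.
Qed.

Lemma dv_gt0 H b : defined rules s l H -> disj rules s l H b -> 0 < disj_value theta Xinf b.
Proof.
move=> dH db; apply: dv_pos.
  by move=> C Cb; have [d p] := disj_child dH db Cb; exact: Xpos.
exact: clause_ms db.1.
Qed.


Lemma def_inv H : defined rules s l H -> H = inl l \/ provable rules s l H.
Proof. case=> [|H0 b C _ db Cb]; [by left | right; exact: db.2]. Qed.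

Variables (K : nat) (A : 'I_K -> atom T N).
Hypothesis HS : is_scc_enum rules s l A.

Lemma same_rstar H C : same_scc rules s l H C -> rstar H C /\ rstar C H.
Proof.
rewrite /same_scc; case=> [->|[h1 h2]]; first by split; apply: rs0.
by split; apply: anc_rstar.
Qed.

Definition A0 := projT1 (cid HS.2).
Lemma A0P : defined rules s l A0 /\
  forall H, (defined rules s l H /\ same_scc rules s l H A0) <-> exists j, A j = H.
Proof. exact: projT2 (cid HS.2). Qed.

Lemma A_props j : defined rules s l (A j) /\ rstar (A j) A0 /\ rstar A0 (A j).
Proof.
have [dj sj] : defined rules s l (A j) /\ same_scc rules s l (A j) A0.
  by apply/(A0P.2 (A j)); exists j.
by have [h1 h2] := same_rstar sj.
Qed.

Lemma inS_of H : defined rules s l H -> rstar H A0 -> rstar A0 H -> exists j, A j = H.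
Proof.
move=> dH h1 h2; apply/(A0P.2 H); split => //.
case: (rstar_anc h1) => [->|a1]; first by left.
case: (rstar_anc h2) => [->|a2]; first by left.
by right.
Qed.

Lemma rstarA j k : rstar (A j) (A k).
Proof. exact: rstar_trans (A_props j).2.1 (A_props k).2.2. Qed.

Lemma usz_A j k : usz (A j) = usz (A k).
Proof. by apply/eqP; rewrite eqn_leq !rstar_usz //; apply: rstarA. Qed.

Lemma shapeA j b : disj rules s l (A j) b -> b.2 = [::] \/ (exists C, b.2 = [:: C]) \/
  (exists C1 C2, b.2 = [:: C1; C2] /\ forall k, A k <> C2).
Proof.
move=> db; case: (disj_shape db) => [|[|[C1 [C2 [E lt]]]]]; try by [left | right; left].
right; right; exists C1, C2; split => // k Ek.
by move: lt; rewrite -Ek (usz_A j k) ltnn.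
Qed.

Lemma Ainl j : A j = inl l -> forall k, A k = A j.
Proof. by move=> Ej k; rewrite Ej; apply: rstar_inl; rewrite -Ej; apply: rstarA. Qed.

Definition Mf k (b : seq (rule T N) * seq (atom T N)) :=
  (\prod_(C <- b.2 | C != A k) Xinf C) * (\prod_(r <- b.1) theta r).

Lemma M_entry j k : scc_M rules theta s l Xinf A j k =
  \sum_(b \in [set b | disj rules s l (A j) b /\ A k \in b.2]) Mf k b.
Proof. by rewrite mxE. Qed.

Lemma Y_entry j : scc_Y rules theta s l Xinf A j 0 =
  \sum_(b \in [set b | disj rules s l (A j) b /\ forall k, A k \notin b.2]) disj_value theta Xinf b.
Proof. by rewrite mxE. Qed.

Lemma Mf_ge0 j k b : disj rules s l (A j) b -> 0 <= Mf k b.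
Proof.
move=> db; have dj := (A_props j).1; rewrite /Mf mulr_ge0 //.
  rewrite big_seq_cond; apply: prodr_ge0 => C /andP[Cb _].
  exact: HX.2.1 (disj_child dj db Cb).1.
rewrite big_seq; apply: prodr_ge0 => r rb; apply: ltW; apply: Hth.
exact (clause_ms db.1 rb).
Qed.

Lemma M_ge0 j k : 0 <= scc_M rules theta s l Xinf A j k.
Proof. by rewrite M_entry; apply: fsumr_ge0 => b [db _]; apply: Mf_ge0 db. Qed.


Lemma Mf_gt0 j k b : disj rules s l (A j) b -> 0 < Mf k b.
Proof.
move=> db; have dj := (A_props j).1; rewrite /Mf mulr_gt0 //.
  rewrite big_seq_cond; apply: prodr_gt0 => C /andP[Cb _].
  by have [d p] := disj_child dj db Cb; exact: Xpos.
rewrite big_seq; apply: prodr_gt0 => r rb; apply: Hth.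
exact (clause_ms db.1 rb).
Qed.

Lemma M_pos j k b : disj rules s l (A j) b -> A k \in b.2 -> 0 < scc_M rules theta s l Xinf A j k.
Proof.
move=> db kb; rewrite M_entry; apply: lt_le_trans (Mf_gt0 k db) (fsum_ge_term _ _ _) => //.
- by apply: sub_finite_set (finD (A j)) => b' [].
- by move=> b' [db' _]; apply: Mf_ge0 db'.
Qed.

Lemma pos_unique j b k : disj rules s l (A j) b -> A k \in b.2 ->
  (forall k', A k' \in b.2 -> k' = k) /\ Mf k b * Xinf (A k) = disj_value theta Xinf b.
Proof.
move=> db; rewrite /Mf /disj_value.
case: (shapeA db) => [->|[[C ->]|[C1 [C2 [-> nS]]]]] //.
- rewrite inE => /eqP Ek; split.
    by move=> k'; rewrite inE => /eqP Ek'; apply: HS.1; rewrite Ek' Ek.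
  rewrite !big_cons !big_nil -Ek eqxx /=; ring.
- rewrite !inE => /orP[] /eqP Ek; last by case: (nS k).
  split.
    move=> k'; rewrite !inE => /orP[] /eqP Ek'; last by case: (nS k').
    by apply: HS.1; rewrite Ek' Ek.
  have n21 : (C2 != C1) by apply/eqP => E; apply: (nS k); rewrite Ek E.
  rewrite !big_cons !big_nil -Ek eqxx Ek n21 /=; ring.
Qed.

Lemma G2 j : \sum_k scc_M rules theta s l Xinf A j k * Xinf (A k) +
   scc_Y rules theta s l Xinf A j 0 <= Xinf (A j).
Proof.
have dj := (A_props j).1.
set D := disj rules s l (A j).
set r := undup (cand (A j)).
have ur : uniq r by apply: undup_uniq.
have Dr : D `<=` [set` r].
  by move=> b [c Hp]; rewrite /= mem_undup; case: b c Hp => ms ps c Hp; apply: clause_cand c Hp.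
set Dk := fun k => [set b | disj rules s l (A j) b /\ A k \in b.2].
set DY := [set b | disj rules s l (A j) b /\ forall k, A k \notin b.2].
have EM : forall k, scc_M rules theta s l Xinf A j k = \sum_(b <- r) (if b \in Dk k then Mf k b else 0).
  move=> k; rewrite M_entry; apply: fsum_seq => // b [db _]; exact: Dr.
have EY : scc_Y rules theta s l Xinf A j 0 = \sum_(b <- r) (if b \in DY then disj_value theta Xinf b else 0).
  rewrite Y_entry; apply: fsum_seq => // b [db _]; exact: Dr.
have EX : Xinf (A j) = \sum_(b <- r) (if b \in D then disj_value theta Xinf b else 0).
  rewrite (HX.1 _ dj) /eq_rhs; exact: fsum_seq.
rewrite (eq_bigr (fun k => \sum_(b <- r) (if b \in Dk k then Mf k b * Xinf (A k) else 0))); last first.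
  move=> k _; rewrite EM mulr_suml; apply: eq_bigr => b _; case: ifP => _ //; by rewrite mul0r.
rewrite exchange_big /= EY EX -big_split /=; apply: ler_sum => b _.
case: (boolP (b \in D)) => bD.
  have db : D b by apply: set_mem.
  case: (boolP [exists k, A k \in b.2]) => [/existsP [k0 hk0]|/existsPn nk].
    have [uq Ev] := pos_unique db hk0.
    have -> : (b \in DY) = false.
      by apply/negbTE/negP => /set_mem [_ h]; move: (h k0); rewrite hk0.
    rewrite (bigD1 k0) //= big1 ?addr0.
      by rewrite ifT ?Ev //; apply: mem_set.
    move=> k kk0; rewrite ifF //; apply/negbTE/negP => /set_mem [_ h].
    by move: kk0; rewrite (uq k h) eqxx.
  rewrite big1 ?add0r.
    by rewrite ifT //; apply: mem_set; split => // k; apply: nk.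
  move=> k _; rewrite ifF //; apply/negbTE/negP => /set_mem [_ h].
  by move: (nk k); rewrite h.
have nD : (b \in D) = false by apply/negbTE.
have nY : (b \in DY) = false.
  by apply/negbTE/negP => /set_mem [h _]; move: bD; rewrite (mem_set h).
rewrite nY big1 ?add0r //.
move=> k _; rewrite ifF //.
by apply/negbTE/negP => /set_mem [h _]; move: bD; rewrite (mem_set h).
Qed.


Lemma Ypos H : provable rules s l H -> forall j, A j = H ->
  exists j', 0 < scc_Y rules theta s l Xinf A j' 0.
Proof.
elim=> {H} H ms ps c Hp IH j Ej.
case: (boolP [exists k, A k \in ps]) => [/existsP [k hk]|/existsPn nk].
  exact: IH (A k) hk k erefl.
exists j; have dj := (A_props j).1.
have db : disj rules s l (A j) (ms, ps) by rewrite Ej; split.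
rewrite Y_entry; apply: lt_le_trans (dv_gt0 dj db) (fsum_ge_term _ _ _) => //.
- by apply: sub_finite_set (finD (A j)) => b' [].
- by move=> b' [db' _]; apply: dv_ge0 db'.
Qed.

Lemma irrA (Z : pred 'I_K) : (exists i, Z i) ->
  (forall i j, Z i -> 0 < scc_M rules theta s l Xinf A i j -> Z j) -> forall i, Z i.
Proof.
move=> [i0 Zi0] cl k.
have gen : forall H C, rstar H C -> forall i, A i = H -> Z i -> rstar C A0 ->
    forall k, A k = C -> Z k.
  move=> H C; elim => [x|x y z p h IH] i Ei Zi hz k' Ek'.
    by have -> : k' = i by apply: HS.1; rewrite Ek' Ei.
  have [dx [b [db yb]]] := p.
  have dy : defined rules s l y := def_step dx db yb.
  have h2 : rstar A0 y.
    by apply: rstar_trans (A_props i).2.2 _; rewrite Ei; apply: rsS p (rs0 _).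
  case: (inS_of dy (rstar_trans h hz) h2) => i1 Ei1.
  apply: (IH i1 Ei1 _ hz k' Ek'); apply: (cl _ _ Zi).
  by apply: (@M_pos i i1 b); rewrite ?Ei ?Ei1.
exact: (gen _ _ (rstarA i0 k) i0 erefl Zi0 (A_props k).2.1 k erefl).
Qed.

Lemma M_inl j : A j = inl l -> forall a b, scc_M rules theta s l Xinf A a b = 0.
Proof.
move=> Ej a b; rewrite M_entry; apply: fsbig1 => bb [db hb].
have [d0 p0] : defined rules s l (A b) /\ provable rules s l (A b).
  exact: disj_child (A_props a).1 db hb.
have [_ [t Et]] := clause_child db.1 db.2 hb.
by move: Et; rewrite (Ainl Ej b) Ej.
Qed.

End G.

Theorem theorem4 (R : realType) (T N : finType) (rules : seq (rule T N))
    (theta : rule T N -> R) (s : N)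
    (Hnoeps : no_eps_rule rules)
    (Hpcfg : is_PCFG rules theta)
    (Huseless : no_useless rules s)
    (Hcons : consistent rules theta s)
    (l : seq T) (Hl : is_prefix rules s l)
    (Xinf : atom T N -> R) (HXinf : least_nonneg_solution rules theta s l Xinf)
    (K : nat) (A : 'I_K -> atom T N) (HS : is_scc_enum rules s l A) :
  let M := scc_M rules theta s l Xinf A in
  let Y := scc_Y rules theta s l Xinf A in
  (1%:M - M) \in unitmx /\
  forall x : 'cV[R]_K, x = M *m x + Y <-> x = invmx (1%:M - M) *m Y.
Proof.
move=> M Y.
have Hth : forall r, r \in rules -> 0 < theta r := Hpcfg.2.1.
have U : (1%:M - M) \in unitmx.
  case: (boolP [exists j, A j == inl l]) => [/existsP [j /eqP Ej]|/existsPn nj].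
    have -> : M = 0.
      by apply/matrixP => a b; rewrite [RHS]mxE; exact: (M_inl theta Hnoeps Xinf HS Ej a b).
    by rewrite subr0 unitmx1.
  apply: unit_of_kernel => z hz i.
  have prov k : provable rules s l (A k).
    case: (def_inv (A_props HS k).1) => // Ek; by move: (nj k); rewrite Ek eqxx.
  apply: (@kernel0 R K (fun a b => M a b) (fun k => Xinf (A k)) (fun k => Y k 0)) => //.
  - by move=> a b; apply: (M_ge0 HXinf Hth HS).
  - by move=> k; apply: (Xpos Hnoeps HXinf Hth (prov k) (A_props HS k).1).
  - move=> k; rewrite /Y Y_entry; apply: fsumr_ge0 => b [db _].
    exact: (dv_ge0 HXinf Hth (A_props HS k).1 db).
  - by move=> k; apply: (G2 Hnoeps HXinf HS).
  - exact: (Ypos Hnoeps HXinf Hth HS (prov i) erefl).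
  - exact: (irrA Hnoeps HXinf Hth HS).
  - move=> k; have := hz k.
    under eq_bigr do rewrite !mxE mulrBl.
    rewrite sumrB (bigD1 k) //= eqxx mul1r big1 ?addr0.
      move/eqP; rewrite subr_eq0 => /eqP ->; apply: eq_bigr => j _; by rewrite /M mxE.
    by move=> j /negbTE; rewrite eq_sym => ->; rewrite mul0r.
split => //; exact: lin_equiv.
Qed.
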